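(* Let $(X,d,\preccurlyeq)$ be a preordered $s$-regular $b$-metric space. Let $T,S:X\to X$ be self mappings and suppose there exists $x_0\in X$ such that $T(x_0)\preccurlyeq S(x_0)$. Suppose that: (i) $T$ is isotone; (ii) $S$ covers $T$ on the set $O_X(x_0)$; (iii) every chain $C\in\mathcal{C}(x_0,T,S,\preccurlyeq)$ has a lower bound $w\in X$ (i.e. $w\preccurlyeq x$ for all $x\in C$) satisfying $w\preccurlyeq T(w)$, and there exists $z\in X$ such that $S^i(z)\preccurlyeq S(w)\preccurlyeq T(w)$ for all $i\in\mathbb{N}$ and $d(T^i(w),S^i(z))\to 0$ as $i\to\infty$. Then the set $\mathrm{Coin}(T,S)\cap O_X(x_0)$ is nonempty and contains a minimal element.
   Context: A $b$-metric space with coefficient $s\ge 1$ is a nonempty set $X$ with a function $d:X\times X\to[0,\infty)$ such that for all $x,y,z\in X$: $d(x,y)=0$ iff $x=y$; $d(x,y)=d(y,x)$; $d(x,y)\le s[d(x,z)+d(z,y)]$. A preorder is a reflexive and transitive binary relation $\preccurlyeq$; $x\succcurlyeq y$ means $y\preccurlyeq x$, and $x\prec y$ means $x\preccurlyeq y$ and $x\ne y$. A preordered $s$-regular $b$-metric space $(X,d,\preccurlyeq)$ is a $b$-metric space with coefficient $s\ge1$ equipped with a preorder $\preccurlyeq$ such that for all $x,y,z\in X$, $x\preccurlyeq y\preccurlyeq z$ implies $\max\{d(x,y),d(y,z)\}\le s^2 d(x,z)$. A chain is a subset of $X$ any two elements of which are comparable under $\preccurlyeq$. A map $T:X\to X$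 is isotone if $x\preccurlyeq y$ implies $T(x)\preccurlyeq T(y)$. $T^i$ denotes the $i$-th iterate of $T$. For $x_0\in X$, $O_X(x_0)=\{x\in X: x\preccurlyeq x_0\}$. $\mathrm{Coin}(T,S)=\{x\in X: T(x)=S(x)\}$. A map $S$ covers a map $T$ on a set $A\subset X$ if for every $x\in A$ with $T(x)\preccurlyeq S(x)$ there exists $y\in X$ with $y\preccurlyeq x$ and $S(y)=T(x)$. $\mathcal{C}(T,S,\preccurlyeq)$ is the set of chains $C\subset X$ such that for all $x,y\in C$: $T(x)\preccurlyeq S(x)$; $x\prec y$ implies $S(x)\preccurlyeq T(y)$; and $S(C)\subset T(X)$. $\mathcal{C}(x_0,T,S,\preccurlyeq)=\{C\in\mathcal{C}(T,S,\preccurlyeq): C\subset O_X(x_0)\text{ and } S(C)\subset T(O_X(x_0))\}$. A minimal element of a set $A\subset X$ is an element $w\in A$ such that there is no $u\in A$ with $u\prec w$. *)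

(* Defs.v *)
From Stdlib Require Export Reals.
Open Scope R_scope.

Section Defs.
Context {X : Type}.

Definition is_b_metric (d : X -> X -> R) (s : R) : Prop :=
  1 <= s /\
  (forall x y, 0 <= d x y) /\
  (forall x y, d x y = 0 <-> x = y) /\
  (forall x y, d x y = d y x) /\
  (forall x y z, d x y <= s * (d x z + d z y)).

Definition is_preorder (le : X -> X -> Prop) : Prop :=
  (forall x, le x x) /\ (forall x y z, le x y -> le y z -> le x z).

Definition plt (le : X -> X -> Prop) (x y : X) : Prop := le x y /\ x <> y.

(* preordered s-regular b-metric space (X nonempty is guaranteed by x0 below) *)
Definition preordered_s_regular_bmetric (d : X -> X -> R) (s : R)
  (le : X -> X -> Prop) : Prop :=
  is_b_metric d s /\ is_preorder le /\
  (forall x y z, le x y -> le y z -> Rmax (d x y) (d y z) <= s ^ 2 * d x z).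

Definition is_chain (le : X -> X -> Prop) (C : X -> Prop) : Prop :=
  forall x y, C x -> C y -> le x y \/ le y x.

Definition isotone (le : X -> X -> Prop) (T : X -> X) : Prop :=
  forall x y, le x y -> le (T x) (T y).

Definition O_X (le : X -> X -> Prop) (x0 : X) : X -> Prop := fun x => le x x0.

Definition Coin (T S : X -> X) : X -> Prop := fun x => T x = S x.

Definition covers_on (le : X -> X -> Prop) (S T : X -> X) (A : X -> Prop) : Prop :=
  forall x, A x -> le (T x) (S x) -> exists y, le y x /\ S y = T x.

Definition in_CTS (le : X -> X -> Prop) (T S : X -> X) (C : X -> Prop) : Prop :=
  is_chain le C /\
  (forall x, C x -> le (T x) (S x)) /\
  (forall x y, C x -> C y -> plt le x y -> le (S x) (T y)) /\
  (forall x, C x -> exists u, S x = T u).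

Definition in_Cx0TS (le : X -> X -> Prop) (x0 : X) (T S : X -> X)
  (C : X -> Prop) : Prop :=
  in_CTS le T S C /\
  (forall x, C x -> O_X le x0 x) /\
  (forall x, C x -> exists u, O_X le x0 u /\ S x = T u).

Definition is_minimal (le : X -> X -> Prop) (A : X -> Prop) (w : X) : Prop :=
  A w /\ ~ (exists u, A u /\ plt le u w).

End Defs.

Definition iter {X : Type} (i : nat) (T : X -> X) (x : X) : X := Nat.iter i T x.

(* Main.v *)
Require Import Defs.
From Stdlib Require Import Reals Lra Classical.
From mathcomp Require ssreflect ssrbool boolp classical_sets.
Open Scope R_scope.

Lemma zorn_min (Y : Type) (A : Y -> Prop) (le : Y -> Y -> Prop) :
  (forall x, le x x) -> (forall x y z, le x y -> le y z -> le x z) ->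
  (forall x y, le x y -> le y x -> x = y) ->
  (exists a, A a) ->
  (forall C : Y -> Prop, (forall x, C x -> A x) -> (exists x, C x) ->
     (forall x y, C x -> C y -> le x y \/ le y x) ->
     exists w, A w /\ forall x, C x -> le w x) ->
  exists w, A w /\ forall u, A u -> le u w -> u = w.
Proof.
intros Hr Ht Ha [a0 Ha0] Hc.
set (R := fun (p q : {x | A x}) => boolp.asbool (le (proj1_sig q) (proj1_sig p))).
assert (HR : forall p q, R p q = true <-> le (proj1_sig q) (proj1_sig p)).
{ intros p q; unfold R. split; intro H.
  - exact (ssrbool.elimT (boolp.asboolP _) H).
  - exact (ssrbool.introT (boolp.asboolP _) H). }
destruct (@classical_sets.Zorn {x | A x} R) as [t Ht'].
- intro t; apply HR; apply Hr.
- intros p q r H1 H2; apply HR; apply HR in H1; apply HR in H2; eauto.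
- intros p q H1 H2; apply HR in H1; apply HR in H2.
  destruct p as [p hp], q as [q hq]; simpl in *.
  assert (p = q) by (apply Ha; auto). subst q.
  f_equal; apply proof_irrelevance.
- intros B HB.
  destruct (classic (exists s, B s)) as [[s0 Hs0]|Hne].
  + destruct (Hc (fun x => exists s, B s /\ proj1_sig s = x)) as [w [Aw Hw]].
    * intros x [s [_ <-]]; exact (proj2_sig s).
    * exists (proj1_sig s0); eauto.
    * intros x y [s [Bs <-]] [s' [Bs' <-]].
      destruct (HB s s' Bs Bs') as [H|H]; apply HR in H; auto.
    * exists (exist _ w Aw); intros s Bs; apply HR; simpl; apply Hw; eauto.
  + exists (exist _ a0 Ha0); intros s Bs; exfalso; eauto.
- exists (proj1_sig t); split; [exact (proj2_sig t)|].
  intros u Au Hu.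
  assert (E := Ht' (exist _ u Au) (proj2 (HR t (exist _ u Au)) Hu)).
  rewrite <- E; reflexivity.
Qed.

Lemma key (X : Type) (d : X -> X -> R) (s : R) (le : X -> X -> Prop)
  (T S : X -> X) (w z : X) :
  preordered_s_regular_bmetric d s le -> isotone le T ->
  le w (T w) ->
  (forall i : nat, le (iter i S z) (S w) /\ le (S w) (T w)) ->
  Un_cv (fun i => d (iter i T w) (iter i S z)) 0 ->
  T w = S w.
Proof.
intros [[Hs1 [Hpos [Hd0 [Hsym Htri]]]] [[Hr Ht] Hreg]] Hiso Hw Hz Hcv.
assert (Hmono : forall i, le (iter i T w) (iter (Datatypes.S i) T w)).
{ induction i. - exact Hw. - change (le (T (iter i T w)) (T (iter (Datatypes.S i) T w))). apply Hiso; exact IHi. }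
assert (Hge : forall k, le (T w) (iter (Datatypes.S k) T w)).
{ induction k. - apply Hr. - eapply Ht; [exact IHk| apply Hmono]. }
assert (Hb : forall k, d (S w) (T w) <= s ^ 4 * d (iter (Datatypes.S k) T w) (iter (Datatypes.S k) S z)).
{ intro k. destruct (Hz (Datatypes.S k)) as [H1 H2].
  pose proof (Hreg _ _ _ H1 (Ht _ _ _ H2 (Hge k))) as R1.
  pose proof (Hreg _ _ _ H2 (Hge k)) as R2.
  pose proof (Rle_trans _ _ _ (Rmax_r _ _) R1) as A1.
  pose proof (Rle_trans _ _ _ (Rmax_l _ _) R2) as A2.
  rewrite (Hsym (iter (Datatypes.S k) S z)) in A1.
  assert (Hs2 : 0 <= s ^ 2) by (apply pow_le; lra).
  replace (s ^ 4) with (s ^ 2 * s ^ 2) by ring.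
  rewrite Rmult_assoc.
  eapply Rle_trans; [exact A2|]. apply Rmult_le_compat_l; [exact Hs2| exact A1]. }
apply Hd0. rewrite Hsym. apply Rle_antisym; [|apply Hpos].
apply Rnot_lt_le; intro HD.
assert (Hs4 : 0 < s ^ 4) by (apply pow_lt; lra).
destruct (Hcv (d (S w) (T w) / (2 * s ^ 4))) as [N HN].
{ apply Rdiv_lt_0_compat; lra. }
specialize (HN (Datatypes.S N) (Nat.le_succ_diag_r N)).
rewrite R_dist_sym in HN. unfold R_dist in HN. rewrite Rminus_0_l in HN.
rewrite Rabs_Ropp, Rabs_pos_eq in HN by apply Hpos.
specialize (Hb N).
apply (Rmult_lt_compat_l (s ^ 4)) in HN; [|exact Hs4].
replace (s ^ 4 * (d (S w) (T w) / (2 * s ^ 4))) with (d (S w) (T w) / 2) in HN by (field; lra).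
lra.
Qed.

Theorem theorem2p1 (X : Type) (d : X -> X -> R) (s : R) (le : X -> X -> Prop)
  (T S : X -> X) (x0 : X) :
  preordered_s_regular_bmetric d s le ->
  le (T x0) (S x0) ->
  isotone le T ->
  covers_on le S T (O_X le x0) ->
  (forall C : X -> Prop, in_Cx0TS le x0 T S C ->
     exists w : X,
       (forall x, C x -> le w x) /\ le w (T w) /\
       exists z : X,
         (forall i : nat, le (iter i S z) (S w) /\ le (S w) (T w)) /\
         Un_cv (fun i => d (iter i T w) (iter i S z)) 0) ->
  (exists x, Coin T S x /\ O_X le x0 x) /\
  (exists w, is_minimal le (fun x => Coin T S x /\ O_X le x0 x) w).
Proof.
intros Hsp Hx0 Hiso Hcov Hch.
pose proof Hsp as [[Hs1 [Hpos [Hd0 [Hsym Htri]]]] [[Hr Ht] Hreg]].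
assert (Hex : exists x, Coin T S x /\ O_X le x0 x).
{ destruct (Hcov x0 (Hr x0) Hx0) as [y [Hy Hsy]].
  destruct (Hch (fun x => x = y)) as [w [Hlb [Hw [z [Hz Hcv]]]]].
  - repeat split.
    + intros a b -> ->; left; apply Hr.
    + intros a ->. rewrite Hsy. apply Hiso; exact Hy.
    + intros a b -> -> [_ H]; congruence.
    + intros a ->; exists x0; auto.
    + intros a ->; exact Hy.
    + intros a ->; exists x0; split; [apply Hr| auto].
  - exists w; split.
    + eapply key; eauto.
    + unfold O_X; eapply Ht; [apply Hlb; reflexivity| exact Hy]. }
split; [exact Hex|].
destruct (zorn_min X (fun x => Coin T S x /\ O_X le x0 x) le) as [w [Aw Hmin]].
- exact Hr.
- exact Ht.
- intros x y H1 H2. apply Hd0.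
  pose proof (Hreg _ _ _ H1 H2) as R1.
  pose proof (Rle_trans _ _ _ (Rmax_l _ _) R1) as A1.
  assert (d x x = 0) by (apply Hd0; reflexivity).
  rewrite H in A1. pose proof (Hpos x y). lra.
- exact Hex.
- intros C HCA [c Hc] Hchain.
  destruct (Hch C) as [w [Hlb [Hw [z [Hz Hcv]]]]].
  + repeat split.
    * exact Hchain.
    * intros a Ca; destruct (HCA a Ca) as [E _]; unfold Coin in E; rewrite E; apply Hr.
    * intros a b Ca Cb [Hab _]; destruct (HCA a Ca) as [E _]; unfold Coin in E; rewrite <- E; apply Hiso; exact Hab.
    * intros a Ca; destruct (HCA a Ca) as [E _]; exists a; symmetry; exact E.
    * intros a Ca; exact (proj2 (HCA a Ca)).
    * intros a Ca; destruct (HCA a Ca) as [E O]; exists a; split; [exact O| symmetry; exact E].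
  + exists w; split; [split|].
    * eapply key; eauto.
    * unfold O_X; eapply Ht; [apply Hlb; exact Hc| exact (proj2 (HCA c Hc))].
    * exact Hlb.
- exists w; split; [exact Aw|].
  intros [u [Au [Hu Hne]]]. apply Hne. apply Hmin; assumption.
Qed.
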